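(* For all $q\in Q$, $p''(q)$ and $r''(\overline p(q))$ have the same sign.
   Context: Let $0<q_\ell<q_h<\infty$, $Q=[q_\ell,q_h]$, and let $c$ be a real number with $0<c<q_\ell$. Let $F$ be a probability distribution on $[0,1]$ with support $[0,1]$ admitting a twice continuously differentiable density $f:(0,1)\to\mathbb{R}_{>0}$. Define $r(v)=(1-F(v))/f(v)$ and $\psi(v)=v-r(v)$ on $(0,1)$, and assume $\psi'(v)>0$ whenever $\psi(v)>0$. For $q\in Q$, $p(q)$ is the unique maximizer over $p\in\mathbb{R}$ of $(p-c)\big(1-F(p/q)\big)$, and $\overline p(q)=p(q)/q$. *)

(* Defs.v *)
From Stdlib Require Import Reals.
From Coquelicot Require Import Coquelicot.
Open Scope R_scope.

Definition deriv_on_interval (a b : R) (g g' : R -> R) : Prop :=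
  forall x, a <= x <= b ->
    filterlim (fun y => (g y - g x) / (y - x))
      (within (fun y => a <= y <= b /\ y <> x) (locally x))
      (locally (g' x)).

Definition same_sign (a b : R) : Prop :=
  (0 < a <-> 0 < b) /\ (a = 0 <-> b = 0) /\ (a < 0 <-> b < 0).

Definition is_cdf_with_density (F f : R -> R) : Prop :=
  (forall x, x <= 0 -> F x = 0) /\
  (forall x, 1 <= x -> F x = 1) /\
  (forall x, continuous F x) /\
  (forall a b, 0 < a -> a <= b -> b < 1 -> is_RInt f a b (F b - F a)).

Definition C2_on_01 (f : R -> R) : Prop :=
  forall x, 0 < x < 1 ->
    ex_derive f x /\ ex_derive (Derive f) x /\ continuous (Derive_n f 2) x.

Definition r_of (F f : R -> R) (v : R) : R := (1 - F v) / f v.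
Definition psi_of (F f : R -> R) (v : R) : R := v - r_of F f v.

Definition profit (F : R -> R) (c q x : R) : R := (x - c) * (1 - F (x / q)).

(* Main.v *)
From Stdlib Require Import Reals Lra Psatz ClassicalEpsilon.
From Coquelicot Require Import Coquelicot.
Require Import Defs.
Open Scope R_scope.

Lemma ball_R (x e y : R) : ball x e y <-> Rabs (y - x) < e.
Proof. unfold ball; simpl; unfold AbsRing_ball, abs, minus, plus, opp; simpl. tauto. Qed.

Lemma quot_of_deriv g x (l : R) : is_derive g x l ->
  is_lim (fun y => (g y - g x)/(y-x)) x l.
Proof.
  intros H. apply is_derive_Reals in H.
  unfold is_lim; simpl. apply filterlim_locally. intros eps.
  destruct (H eps (cond_pos eps)) as [d Hd].
  exists d. intros y Hy Hyx. apply ball_R in Hy. apply ball_R.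
  assert (Hh : y - x <> 0) by lra.
  specialize (Hd (y - x) Hh Hy). rewrite Rplus_minus in Hd. exact Hd.
Qed.

Lemma deriv_of_quot g x (l : R) : is_lim (fun y => (g y - g x)/(y-x)) x l -> is_derive g x l.
Proof.
  intros H. apply is_derive_Reals.
  unfold is_lim in H; simpl in H. intros eps Heps.
  destruct (proj1 (filterlim_locally _ _) H (mkposreal eps Heps)) as [d Hd].
  exists d. intros h Hh0 Hh.
  assert (Hb : ball x d (x + h)) by (apply ball_R; replace (x + h - x) with h by ring; exact Hh).
  specialize (Hd (x+h) Hb). assert (x + h <> x) by lra.
  specialize (Hd H0). apply ball_R in Hd. simpl in Hd.
  replace (x + h - x) with h in Hd by ring. exact Hd.
Qed.

Lemma incr_right g x l : is_derive g x l -> 0 < l -> forall eps, 0 < eps ->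
  exists s, x < s < x + eps /\ g x < g s.
Proof.
  intros H Hl eps He. apply is_derive_Reals in H.
  destruct (H l Hl) as [d Hd].
  set (h := Rmin (d/2) (eps/2)).
  assert (Hd0 := cond_pos d).
  assert (Hh0 : 0 < h) by (unfold h; apply Rmin_glb_lt; lra).
  assert (Hh1 : h <= d/2) by apply Rmin_l.
  assert (Hh2 : h <= eps/2) by apply Rmin_r.
  assert (Ha : Rabs h < d) by (rewrite Rabs_pos_eq; lra).
  specialize (Hd h ltac:(lra) Ha).
  exists (x + h). split; [lra|].
  apply Rabs_def2 in Hd. destruct Hd as [_ Hd].
  assert (0 < (g (x + h) - g x) / h) by lra.
  assert (0 < (g (x + h) - g x)).
  { replace (g (x + h) - g x) with (((g (x + h) - g x) / h) * h) by (field; lra).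
    apply Rmult_lt_0_compat; lra. }
  lra.
Qed.

Lemma incr_left g x l : is_derive g x l -> 0 < l -> forall eps, 0 < eps ->
  exists s, x - eps < s < x /\ g s < g x.
Proof.
  intros H Hl eps He. apply is_derive_Reals in H.
  destruct (H l Hl) as [d Hd].
  set (h := - Rmin (d/2) (eps/2)).
  assert (Hd0 := cond_pos d).
  assert (Hh0 : 0 < Rmin (d/2) (eps/2)) by (apply Rmin_glb_lt; lra).
  assert (Hh1 : Rmin (d/2) (eps/2) <= d/2) by apply Rmin_l.
  assert (Hh2 : Rmin (d/2) (eps/2) <= eps/2) by apply Rmin_r.
  assert (Ha : Rabs h < d) by (unfold h; rewrite Rabs_Ropp, Rabs_pos_eq; lra).
  specialize (Hd h ltac:(unfold h; lra) Ha).
  exists (x + h). split; [unfold h; lra|].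
  apply Rabs_def2 in Hd. destruct Hd as [_ Hd].
  assert (0 < (g (x + h) - g x) / h) by lra.
  assert (g (x + h) - g x < 0).
  { replace (g (x + h) - g x) with (((g (x + h) - g x) / h) * h) by (field; unfold h; lra).
    unfold h in *; nra. }
  lra.
Qed.

Lemma fermat g x l : is_derive g x l -> (forall y, g y <= g x) -> l = 0.
Proof.
  intros H Hm.
  destruct (Rtotal_order l 0) as [Hl|[Hl|Hl]]; auto.
  - assert (H' : is_derive (fun y => - g y) x (- l)).
    { apply (is_derive_opp g x l) in H. exact H. }
    destruct (incr_left _ _ _ H' ltac:(lra) 1 ltac:(lra)) as [s [_ Hs]].
    specialize (Hm s). lra.
  - destruct (incr_right _ _ _ H Hl 1 ltac:(lra)) as [s [_ Hs]].
    specialize (Hm s). lra.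
Qed.

Lemma is_derive_eq (g : R -> R) (x l l' : R) : is_derive g x l -> l = l' -> is_derive g x l'.
Proof. intros H ->; exact H. Qed.

Lemma loc01 x : 0 < x < 1 -> locally x (fun t => 0 < t < 1).
Proof.
  intros Hx. apply (locally_interval _ x 0 1); simpl; try lra. intros; lra.
Qed.

Lemma F_deriv F f : is_cdf_with_density F f -> C2_on_01 f ->
  forall x, 0 < x < 1 -> is_derive F x (f x).
Proof.
  intros [_ [_ [_ HI]]] Hf2 x Hx.
  assert (H : is_derive (fun y => F y - F (x/2)) x (f x)).
  { apply (is_derive_RInt f (fun y => F y - F (x/2)) (x/2) x).
    - apply (locally_interval _ x (x/2) 1); simpl; try lra.
      intros y Hy1 Hy2. apply HI; lra.
    - apply ex_derive_continuous. apply (Hf2 x Hx). }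
  assert (H2 := is_derive_plus _ _ _ _ _ H (is_derive_const (F (x/2)) x)).
  apply (is_derive_ext _ F) in H2.
  - eapply is_derive_eq; [exact H2|]. unfold plus, zero; simpl; ring.
  - intros t; unfold plus; simpl; ring.
Qed.

Definition r1 (F f : R -> R) (v : R) : R :=
  (-(f v * f v) - (1 - F v) * Derive f v) / (f v * f v).

Lemma r_deriv F f : is_cdf_with_density F f -> C2_on_01 f ->
  (forall v, 0 < v < 1 -> 0 < f v) ->
  forall x, 0 < x < 1 -> is_derive (r_of F f) x (r1 F f x).
Proof.
  intros HF Hf2 Hfp x Hx.
  assert (HFd := F_deriv F f HF Hf2 x Hx).
  assert (Hfd : is_derive f x (Derive f x)) by (apply Derive_correct; apply (Hf2 x Hx)).
  assert (H1 : is_derive (fun y => 1 - F y) x (0 - f x)).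
  { eapply is_derive_eq. apply (is_derive_minus (fun _ => 1) F x _ _ (is_derive_const _ _) HFd).
    unfold minus, plus, opp, zero; simpl; ring. }
  assert (Hf0 := Hfp x Hx).
  assert (H := is_derive_div _ _ x _ _ H1 Hfd ltac:(lra)).
  unfold r_of. eapply is_derive_eq; [exact H|]. unfold r1. field. lra.
Qed.

Lemma r1_ex_derive F f : is_cdf_with_density F f -> C2_on_01 f ->
  (forall v, 0 < v < 1 -> 0 < f v) ->
  forall x, 0 < x < 1 -> ex_derive (r1 F f) x.
Proof.
  intros HF Hf2 Hfp x Hx.
  assert (HFd := F_deriv F f HF Hf2 x Hx).
  destruct (Hf2 x Hx) as [Hf1 [Hf1' _]].
  assert (Hf0 := Hfp x Hx).
  unfold r1. auto_derive.
  - repeat split; auto. exists (f x); exact HFd. nra.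
Qed.

Definition D1 (F f : R -> R) (v : R) : R := 1 - r1 F f v.
Definition R2 (F f : R -> R) (v : R) : R := Derive (r1 F f) v.

Lemma psi_deriv F f : is_cdf_with_density F f -> C2_on_01 f ->
  (forall v, 0 < v < 1 -> 0 < f v) ->
  forall x, 0 < x < 1 -> is_derive (psi_of F f) x (D1 F f x).
Proof.
  intros HF Hf2 Hfp x Hx.
  assert (H := is_derive_minus _ _ x _ _ (is_derive_id x) (r_deriv F f HF Hf2 Hfp x Hx)).
  unfold psi_of. eapply is_derive_eq; [exact H|]. unfold D1, minus, plus, opp, one; simpl. ring.
Qed.

Lemma D1_deriv F f : is_cdf_with_density F f -> C2_on_01 f ->
  (forall v, 0 < v < 1 -> 0 < f v) ->
  forall x, 0 < x < 1 -> is_derive (D1 F f) x (- R2 F f x).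
Proof.
  intros HF Hf2 Hfp x Hx.
  assert (H0 : is_derive (r1 F f) x (R2 F f x)) by (apply Derive_correct; apply (r1_ex_derive F f HF Hf2 Hfp x Hx)).
  assert (H := is_derive_minus _ _ x _ _ (is_derive_const 1 x) H0).
  unfold D1. eapply is_derive_eq; [exact H|]. unfold minus, plus, opp, zero; simpl. ring.
Qed.

Lemma Dn2 F f : is_cdf_with_density F f -> C2_on_01 f ->
  (forall v, 0 < v < 1 -> 0 < f v) ->
  forall x, 0 < x < 1 -> Derive_n (r_of F f) 2 x = R2 F f x.
Proof.
  intros HF Hf2 Hfp x Hx.
  change (Derive (Derive_n (r_of F f) 1) x = R2 F f x). unfold R2.
  apply Derive_ext_loc.
  generalize (loc01 x Hx). apply filter_imp. intros t Ht.
  change (Derive (r_of F f) t = r1 F f t).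
  apply is_derive_unique. apply r_deriv; auto.
Qed.

Lemma Dpsi F f : is_cdf_with_density F f -> C2_on_01 f ->
  (forall v, 0 < v < 1 -> 0 < f v) ->
  forall x, 0 < x < 1 -> Derive (psi_of F f) x = D1 F f x.
Proof. intros. apply is_derive_unique. apply psi_deriv; auto. Qed.

Lemma psi_cont F f : is_cdf_with_density F f -> C2_on_01 f ->
  (forall v, 0 < v < 1 -> 0 < f v) ->
  forall x, 0 < x < 1 -> continuous (psi_of F f) x.
Proof. intros. apply (@ex_derive_continuous R_AbsRing R_NormedModule). eexists. apply psi_deriv; auto. Qed.

Lemma inj_aux F f : is_cdf_with_density F f -> C2_on_01 f ->
  (forall v, 0 < v < 1 -> 0 < f v) ->
  (forall v, 0 < v < 1 -> 0 < psi_of F f v -> 0 < Derive (psi_of F f) v) ->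
  forall v1 v2, 0 < v1 < 1 -> 0 < v2 < 1 -> v1 < v2 -> 0 < psi_of F f v1 ->
  psi_of F f v1 = psi_of F f v2 -> False.
Proof.
  intros HF Hf2 Hfp Hpsi v1 v2 H1 H2 H12 Hp Heq.
  destruct (continuity_ab_maj (psi_of F f) v1 v2 ltac:(lra)) as [M [HM HMr]].
  { intros t Ht. apply continuity_pt_filterlim. apply psi_cont; auto; lra. }
  assert (Hd1 : 0 < D1 F f v1) by (rewrite <- Dpsi; auto).
  destruct (incr_right _ _ _ (psi_deriv F f HF Hf2 Hfp v1 H1) Hd1 (v2 - v1) ltac:(lra)) as [s [Hs1 Hs2]].
  assert (HsM := HM s ltac:(lra)).
  assert (M <> v1) by (intro; subst; lra).
  assert (M <> v2) by (intro; subst; lra).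
  assert (HM01 : 0 < M < 1) by lra.
  assert (HdM : 0 < D1 F f M) by (rewrite <- Dpsi; auto; apply Hpsi; auto; lra).
  destruct (incr_right _ _ _ (psi_deriv F f HF Hf2 Hfp M HM01) HdM (v2 - M) ltac:(lra)) as [s' [Hs1' Hs2']].
  assert (HM' := HM s' ltac:(lra)). lra.
Qed.

Lemma psi_inj F f : is_cdf_with_density F f -> C2_on_01 f ->
  (forall v, 0 < v < 1 -> 0 < f v) ->
  (forall v, 0 < v < 1 -> 0 < psi_of F f v -> 0 < Derive (psi_of F f) v) ->
  forall v1 v2, 0 < v1 < 1 -> 0 < v2 < 1 -> 0 < psi_of F f v1 ->
  psi_of F f v1 = psi_of F f v2 -> v1 = v2.
Proof.
  intros HF Hf2 Hfp Hpsi v1 v2 H1 H2 Hp Heq.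
  destruct (Rlt_or_le v1 v2) as [H|H].
  { exfalso; exact (inj_aux F f HF Hf2 Hfp Hpsi v1 v2 H1 H2 H Hp Heq). }
  destruct (Rle_lt_or_eq_dec v2 v1 H) as [H'|H']; [|auto].
  exfalso; apply (inj_aux F f HF Hf2 Hfp Hpsi v2 v1 H2 H1 H'); [rewrite <- Heq; exact Hp | symmetry; exact Heq].
Qed.

Lemma foc F f c q P : is_cdf_with_density F f -> C2_on_01 f ->
  (forall v, 0 < v < 1 -> 0 < f v) -> 0 < c -> c < q ->
  (forall x, profit F c q x <= profit F c q P) ->
  (forall x, (forall y, profit F c q y <= profit F c q x) -> x = P) ->
  0 < P / q < 1 /\ psi_of F f (P / q) = c / q.
Proof.
  intros HF Hf2 Hfp Hc Hcq Hmax Huniq.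
  destruct HF as [HF0 [HF1 [HFc HFI]]].
  assert (Hq : 0 < q) by lra.
  assert (Hv0 : 0 < P / q).
  { destruct (Rlt_or_le 0 (P / q)) as [H|H]; auto. exfalso.
    assert (HP : P <= 0).
    { replace P with ((P / q) * q) by (field; lra). nra. }
    specialize (Hmax c). unfold profit in Hmax. rewrite (HF0 _ H) in Hmax.
    ring_simplify in Hmax. lra. }
  assert (Hv1 : P / q < 1).
  { destruct (Rlt_or_le (P / q) 1) as [H|H]; auto. exfalso.
    assert (Hz : forall x, 1 <= x / q -> profit F c q x = 0).
    { intros x Hx. unfold profit. rewrite (HF1 _ Hx). ring. }
    assert (E : P + 1 = P).
    { apply Huniq. intros y. rewrite (Hz (P + 1)).
      - rewrite <- (Hz P H). apply Hmax.
      - unfold Rdiv in *. assert (0 < / q) by (apply Rinv_0_lt_compat; lra). nra. }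
    lra. }
  split; [lra|].
  set (v := P / q) in *.
  assert (HFd : is_derive F v (f v)) by (apply F_deriv; [repeat split; auto| auto | lra]).
  assert (Hg : is_derive (fun x => x / q) P (/ q)).
  { auto_derive; [auto | field; lra]. }
  assert (HFq := is_derive_comp F (fun x => x / q) P _ _ HFd Hg).
  assert (H1 : is_derive (fun x => 1 - F (x / q)) P (0 - scal (/q) (f v))).
  { eapply is_derive_eq. apply (is_derive_minus (fun _ => 1) _ P _ _ (is_derive_const _ _) HFq).
    unfold minus, plus, opp, zero, scal; simpl; unfold mult; simpl; ring. }
  assert (H2 : is_derive (fun x => x - c) P 1).
  { auto_derive; auto. }
  assert (H3 := is_derive_mult _ _ P _ _ H2 H1 Rmult_comm).
  assert (Hz := fermat (profit F c q) P _ H3 Hmax).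
  unfold mult, plus, scal in Hz; simpl in Hz. unfold mult in Hz; simpl in Hz.
  fold v in Hz.
  assert (Hfv := Hfp v ltac:(lra)).
  unfold psi_of, r_of.
  assert (E : 1 - F v = (P - c) * (f v) / q).
  { assert (1 - F v - (P - c) * f v * / q = 0) by (rewrite <- Hz; ring). unfold Rdiv; lra. }
  rewrite E.
  replace (v - (P - c) * f v / q / f v) with (v - (P - c)/q) by (field; lra).
  unfold v. field. lra.
Qed.

Definition Hyps (F f : R -> R) : Prop :=
  is_cdf_with_density F f /\ C2_on_01 f /\ (forall v, 0 < v < 1 -> 0 < f v) /\
  (forall v, 0 < v < 1 -> 0 < psi_of F f v -> 0 < Derive (psi_of F f) v).

Definition Vf (F f : R -> R) (c q : R) : R :=
  epsilon (inhabits 0) (fun v => 0 < v < 1 /\ psi_of F f v = c / q).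

Lemma V_eq F f c q v : Hyps F f -> 0 < c -> 0 < q -> 0 < v < 1 -> psi_of F f v = c / q ->
  Vf F f c q = v.
Proof.
  intros [HF [Hf2 [Hfp Hpsi]]] Hc Hq Hv Hpv.
  assert (Hs : 0 < Vf F f c q < 1 /\ psi_of F f (Vf F f c q) = c / q).
  { unfold Vf. apply epsilon_spec. exists v; auto. }
  destruct Hs as [Hs1 Hs2].
  symmetry. apply (psi_inj F f HF Hf2 Hfp Hpsi v); auto.
  - rewrite Hpv. apply Rdiv_lt_0_compat; auto.
  - congruence.
Qed.

Lemma cont_cq c q0 : 0 < q0 -> continuous (fun q => c / q) q0.
Proof.
  intros Hq. apply (@ex_derive_continuous R_AbsRing R_NormedModule).
  auto_derive. lra.
Qed.

Lemma V_local F f c q0 : Hyps F f -> 0 < c -> 0 < q0 ->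
  0 < Vf F f c q0 < 1 -> psi_of F f (Vf F f c q0) = c / q0 ->
  forall eps, 0 < eps -> locally q0 (fun q =>
    0 < Vf F f c q < 1 /\ psi_of F f (Vf F f c q) = c / q /\
    Rabs (Vf F f c q - Vf F f c q0) < eps).
Proof.
  intros HH Hc Hq0 Hv0 Hpv0 eps Heps.
  pose proof HH as [HF [Hf2 [Hfp Hpsi]]].
  set (v0 := Vf F f c q0) in *.
  set (e := Rmin eps (Rmin (v0/2) ((1 - v0)/2))).
  assert (He1 : e <= eps) by apply Rmin_l.
  assert (He2 : e <= v0/2) by (eapply Rle_trans; [apply Rmin_r| apply Rmin_l]).
  assert (He3 : e <= (1-v0)/2) by (eapply Rle_trans; [apply Rmin_r| apply Rmin_r]).
  assert (He0 : 0 < e) by (unfold e; repeat apply Rmin_glb_lt; lra).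
  assert (Hd : 0 < D1 F f v0).
  { rewrite <- Dpsi; auto. apply Hpsi; auto. rewrite Hpv0. apply Rdiv_lt_0_compat; auto. }
  assert (Hpd := psi_deriv F f HF Hf2 Hfp v0 Hv0).
  destruct (incr_left _ _ _ Hpd Hd e He0) as [a [Ha1 Ha2]].
  destruct (incr_right _ _ _ Hpd Hd e He0) as [b [Hb1 Hb2]].
  assert (Hloc1 : locally q0 (fun q => psi_of F f a < c / q < psi_of F f b)).
  { assert (Hc0 := cont_cq c q0 Hq0).
    unfold continuous, filterlim, filter_le, filtermap in Hc0.
    apply (Hc0 (fun y => psi_of F f a < y < psi_of F f b)).
    apply (locally_interval _ (c / q0) (psi_of F f a) (psi_of F f b)); simpl; try lra.
    intros; lra. }
  assert (Hloc2 : locally q0 (fun q => 0 < q)).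
  { apply (locally_interval _ q0 0 p_infty); simpl; auto. }
  generalize (filter_and _ _ Hloc1 Hloc2). apply filter_imp.
  intros q [[Hq1 Hq2] Hq3].
  destruct (IVT_Rbar_incr (psi_of F f) a b (psi_of F f a) (psi_of F f b) (c / q)) as [x [Hx1 [Hx2 Hx3]]].
  - apply is_lim_continuity. apply continuity_pt_filterlim. apply psi_cont; auto; lra.
  - apply is_lim_continuity. apply continuity_pt_filterlim. apply psi_cont; auto; lra.
  - intros x Hx1 Hx2. simpl in Hx1, Hx2. apply continuity_pt_filterlim. apply psi_cont; auto; lra.
  - simpl; lra.
  - simpl; lra.
  - simpl in Hx1, Hx2.
    rewrite (V_eq F f c q x HH Hc Hq3 ltac:(lra) Hx3).
    split; [lra|]. split; [auto|]. apply Rabs_def1; lra.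
Qed.

Lemma ex_cont (g : R -> R) x : ex_derive g x -> continuity_pt g x.
Proof. intros H. apply continuity_pt_filterlim. apply (@ex_derive_continuous R_AbsRing R_NormedModule). exact H. Qed.

Lemma alg1 c q q0 w v0 : c<>0 -> q<>0 -> q0<>0 -> q<>q0 -> w<>v0 ->
  -c/(q*q0)/((c/q - c/q0)/(w - v0)) = (w-v0)/(q-q0).
Proof.
  intros. assert (c / q - c / q0 <> 0).
  { replace (c / q - c / q0) with (c * (q0 - q) / (q * q0)) by (field; lra).
    intro E. unfold Rdiv in E. apply Rmult_integral in E. destruct E as [E|E].
    - apply Rmult_integral in E; destruct E; lra.
    - exact (Rinv_neq_0_compat (q*q0) ltac:(intro X; apply Rmult_integral in X; destruct X; auto) E). }
  field. repeat split; auto; try lra. replace (c*q0 - c*q) with (c*(q0-q)) by ring. apply Rmult_integral_contrapositive_currified; lra.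
Qed.

Lemma V_deriv F f c q0 : Hyps F f -> 0 < c -> 0 < q0 ->
  0 < Vf F f c q0 < 1 -> psi_of F f (Vf F f c q0) = c / q0 ->
  is_derive (Vf F f c) q0 (- c / (q0 ^ 2 * D1 F f (Vf F f c q0))).
Proof.
  intros HH Hc Hq0 Hv0 Hpv0.
  pose proof HH as [HF [Hf2 [Hfp Hpsi]]].
  assert (Hloc := V_local F f c q0 HH Hc Hq0 Hv0 Hpv0).
  set (v0 := Vf F f c q0) in *.
  assert (Hd : 0 < D1 F f v0).
  { rewrite <- Dpsi; auto. apply Hpsi; auto. rewrite Hpv0. apply Rdiv_lt_0_compat; auto. }
  assert (HlimV : is_lim (Vf F f c) q0 v0).
  { unfold is_lim; simpl. apply filterlim_locally. intros eps.
    unfold Rbar_locally', locally', within.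
    generalize (Hloc eps (cond_pos eps)). apply filter_imp.
    intros q [_ [_ Hq]] _. apply ball_R. exact Hq. }
  assert (Hloc2 : locally q0 (fun q => 0 < q)).
  { apply (locally_interval _ q0 0 p_infty); simpl; auto. }
  assert (Hloc3 := filter_and _ _ (Hloc 1 Rlt_0_1) Hloc2).
  assert (Hne : Rbar_locally' q0 (fun q => Vf F f c q <> v0)).
  { unfold Rbar_locally', locally', within. generalize Hloc3. apply filter_imp.
    intros q [[_ [Hpq _]] Hq] Hqq E. rewrite E, Hpv0 in Hpq.
    assert (H0 : c * (q0 - q) = (c/q - c/q0) * (q * q0)) by (field; lra).
    rewrite Hpq, Rminus_diag, Rmult_0_l in H0.
    apply Rmult_integral in H0. destruct H0; lra. }
  assert (HQ := quot_of_deriv _ _ _ (psi_deriv F f HF Hf2 Hfp v0 Hv0)).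
  assert (Hne' : Rbar_locally' q0 (fun y => Finite (Vf F f c y) <> Finite v0)).
  { generalize Hne; apply filter_imp; intros y Hy E; apply Hy; injection E; auto. }
  assert (Hcomp := is_lim_comp _ _ q0 _ _ HQ HlimV Hne').
  assert (Hlc : is_lim (fun q => - c / (q * q0)) q0 ((fun q => - c / (q * q0)) q0)).
  { apply (is_lim_continuity (fun q => - c / (q * q0))). apply ex_cont. auto_derive. nra. }
  assert (Hdiv := is_lim_div _ _ q0 _ _ Hlc Hcomp ltac:(simpl; intro E; injection E; lra) ltac:(simpl; auto)).
  apply deriv_of_quot.
  apply (is_lim_ext_loc (fun y => - c / (y * q0) /
          ((psi_of F f (Vf F f c y) - psi_of F f v0) / (Vf F f c y - v0)))).
  - unfold Rbar_locally', locally', within. generalize (filter_and _ _ Hloc3 Hne). unfold Rbar_locally', locally', within.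
    simpl. apply filter_imp. intros q [[[_ [Hpq _]] Hq] Hn] Hqq.
    specialize (Hn Hqq). rewrite Hpq, Hpv0. apply alg1; try lra. exact Hn.
  - replace (- c / (q0 ^ 2 * D1 F f v0)) with (- c / (q0 * q0) * / D1 F f v0) by (field; lra).
    exact Hdiv.
Qed.

Lemma dw_of_derive (a b x l : R) (g h : R -> R) : is_derive g x l ->
  (forall y, a <= y <= b -> h y = g y) -> a <= x <= b ->
  filterlim (fun y => (h y - h x)/(y - x))
    (within (fun y => a <= y <= b /\ y <> x) (locally x)) (locally l).
Proof.
  intros Hd Heq Hx. assert (H := quot_of_deriv g x l Hd).
  unfold is_lim in H; simpl in H.
  intros P HP. specialize (H P HP).
  unfold filtermap, Rbar_locally', locally', within in *.
  generalize H; apply filter_imp. intros y Hy [HDy Hyx].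
  rewrite (Heq y HDy), (Heq x Hx). apply Hy; auto.
Qed.

Lemma same_sign_pos K b : 0 < K -> same_sign (K * b) b.
Proof.
  intros HK. unfold same_sign.
  split; [|split]; split; intros H.
  - destruct (Rtotal_order b 0) as [Hb|[Hb|Hb]]; auto; nra.
  - nra.
  - destruct (Rmult_integral _ _ H); lra.
  - rewrite H; ring.
  - destruct (Rtotal_order b 0) as [Hb|[Hb|Hb]]; auto; nra.
  - nra.
Qed.

Theorem lemma9 (ql qh c : R) (F f p : R -> R)
  (Hql : 0 < ql) (Hqlh : ql < qh) (Hc0 : 0 < c) (Hcql : c < ql)
  (HF : is_cdf_with_density F f)
  (Hfpos : forall v, 0 < v < 1 -> 0 < f v)
  (Hf2 : C2_on_01 f)
  (Hpsi : forall v, 0 < v < 1 -> 0 < psi_of F f v -> 0 < Derive (psi_of F f) v)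
  (Hp_max : forall q, ql <= q <= qh ->
     forall x, profit F c q x <= profit F c q (p q))
  (Hp_unique : forall q, ql <= q <= qh ->
     forall x, (forall y, profit F c q y <= profit F c q x) -> x = p q) :
  exists p1 p2 : R -> R,
    deriv_on_interval ql qh p p1 /\
    deriv_on_interval ql qh p1 p2 /\
    forall q, ql <= q <= qh ->
      same_sign (p2 q) (Derive_n (r_of F f) 2 (p q / q)).
Proof.
  assert (HH : Hyps F f) by exact (conj HF (conj Hf2 (conj Hfpos Hpsi))).
  set (V := Vf F f c).
  assert (HV : forall q, ql <= q <= qh -> V q = p q / q /\ 0 < V q < 1 /\ psi_of F f (V q) = c / q).
  { intros q Hq.
    destruct (foc F f c q (p q) HF Hf2 Hfpos Hc0 ltac:(lra) (Hp_max q Hq) (Hp_unique q Hq)) as [H1 H2].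
    assert (E : V q = p q / q) by (apply V_eq; auto; lra).
    rewrite E; auto. }
  set (Vp := fun q => - c / (q ^ 2 * D1 F f (V q))).
  set (p1 := fun q => V q + q * Vp q).
  set (V2 := fun q => c * (2 * q * D1 F f (V q) - q ^ 2 * R2 F f (V q) * Vp q) / (q ^ 2 * D1 F f (V q)) ^ 2).
  set (p2 := fun q => 2 * Vp q + q * V2 q).
  assert (HVd : forall q, ql <= q <= qh -> is_derive V q (Vp q)).
  { intros q Hq. destruct (HV q Hq) as [_ [H1 H2]]. apply V_deriv; auto; lra. }
  assert (HD1pos : forall q, ql <= q <= qh -> 0 < D1 F f (V q)).
  { intros q Hq. destruct (HV q Hq) as [_ [H1 H2]].
    rewrite <- Dpsi; auto. apply Hpsi; auto. rewrite H2. apply Rdiv_lt_0_compat; lra. }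
  assert (Hp1 : forall q, ql <= q <= qh -> is_derive (fun y => y * V y) q (p1 q)).
  { intros q Hq. assert (H := HVd q Hq).
    auto_derive. { exists (Vp q); exact H. }
    replace (Derive (fun x => V x) q) with (Vp q) by (symmetry; apply is_derive_unique; exact H).
    unfold p1. ring. }
  assert (Hp2 : forall q, ql <= q <= qh -> is_derive p1 q (p2 q)).
  { intros q Hq. assert (H := HVd q Hq). destruct (HV q Hq) as [_ [H1 _]].
    assert (HD := D1_deriv F f HF Hf2 Hfpos (V q) H1).
    assert (Hpos := HD1pos q Hq).
    unfold p1, Vp. auto_derive.
    { assert (0 < q * (q * 1) * D1 F f (V q)) by (apply Rmult_lt_0_compat; [nra|lra]).
      repeat split; try (eexists; eassumption); lra. }
    replace (Derive (fun x => V x) q) with (Vp q) by (symmetry; apply is_derive_unique; exact H).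
    replace (Derive (fun x => D1 F f x) (V q)) with (- R2 F f (V q)) by (symmetry; apply is_derive_unique; exact HD).
    unfold p2, V2, Vp. field. lra. }
  exists p1, p2. split; [|split].
  - intros x Hx. apply (dw_of_derive ql qh x (p1 x) (fun y => y * V y) p (Hp1 x Hx)); auto.
    intros y Hy. destruct (HV y Hy) as [E _]. rewrite E. field. lra.
  - intros x Hx. apply (dw_of_derive ql qh x (p2 x) p1 p1 (Hp2 x Hx)); auto.
  - intros q Hq. destruct (HV q Hq) as [E [H1 _]]. rewrite <- E.
    rewrite (Dn2 F f HF Hf2 Hfpos (V q) H1).
    assert (Hpos := HD1pos q Hq).
    replace (p2 q) with ((c ^ 2 / (q ^ 3 * D1 F f (V q) ^ 3)) * R2 F f (V q)).
    + apply same_sign_pos. apply Rdiv_lt_0_compat; [nra|].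
      apply Rmult_lt_0_compat; apply pow_lt; lra.
    + unfold p2, V2, Vp. field. lra.
Qed.
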